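(* Let $\mathbb{K}\in\{\mathbb{R},\mathbb{C}\}$ and let $\mathcal{X}$ be a topological $\mathbb{K}$-vector space whose topological dual $\mathcal{X}^{\ast}$ separates the points of $\mathcal{X}$. Then the set $\mathbf{B}(\mathcal{X}^{\ast})$ is a closed subset of $\mathbf{F}(\mathcal{X}^{\ast})$ in the weak*-Hausdorff hypertopology, it is convex and path-connected, and it is a connected component (maximal connected subset) of $\mathbf{F}(\mathcal{X}^{\ast})$.
   Context: Topological vector spaces are Hausdorff. $\mathcal{X}^{\ast}$ carries the weak* topology. $\mathbf{F}(\mathcal{X}^{\ast})$ is the set of nonempty weak*-closed subsets of $\mathcal{X}^{\ast}$, endowed with the weak*-Hausdorff hypertopology: the topology generated by the extended pseudometrics $d_H^{(A)}(F,\tilde F)=\max\{\sup_{\sigma\in F}\inf_{\tilde\sigma\in\tilde F}|(\sigma-\tilde\sigma)(A)|,\ \sup_{\tilde\sigma\in\tilde F}\inf_{\sigma\in F}|(\sigma-\tilde\sigma)(A)|\}\in[0,\infty]$, $A\in\mathcal{X}$. $\mathbf{B}(\mathcal{X}^{\ast})$ is the set of nonempty weak*-closed subsets $B\subseteq\mathcal{X}^{\ast}$ that are bounded in the weak* topology, i.e. $\sup_{\sigma\in B}|\sigma(A)|<\infty$ for every $A\in\mathcal{X}$. Convexity of $\mathbf{B}(\mathcal{X}^{\ast})$ means: for $B_0,B_1\in\mathbf{B}(\mathcal{X}^{\ast})$ and $\lambda\in[0,1]$, the (weak*-closure of the) set $\{(1-\lambda)\sigma_0+\lambda\sigma_1:\sigma_0\in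 B_0,\sigma_1\in B_1\}$ belongs to $\mathbf{B}(\mathcal{X}^{\ast})$. *)

(* Defs.v *)
From HB Require Import structures.
From mathcomp Require Import all_boot all_algebra.
From mathcomp Require Import all_classical all_reals all_analysis.
From mathcomp.real_closed Require Import complex.

Set Implicit Arguments.
Unset Strict Implicit.
Unset Printing Implicit Defensive.

Import GRing.Theory Num.Theory numFieldTopology.Exports.
Local Open Scope classical_set_scope.
Local Open Scope ring_scope.

Section Hyper.
(* R : the real numbers; K : the scalar field (R or R[i]);
   absK : K -> R the modulus |.| on K. *)
Variables (R : realType) (K : numFieldType) (absK : K -> R).
Variable (X : topologicalLmodType K).

Definition dual : set (X -> K) :=
  [set s | (forall (a : K) (x y : X), s (a *: x + y) = a * s x + s y)
           /\ continuous s].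

(* The weak-star topology on Xdual is the subspace topology of {ptws X -> K}. *)
Definition wstar_closure (S : set (X -> K)) : set (X -> K) :=
  closure (S : set (prod_topology (fun _ : X => K))) `&` dual.

Definition wstar_closed (S : set (X -> K)) : Prop :=
  S `<=` dual /\ wstar_closure S `<=` S.

Definition Fset : set (set (X -> K)) :=
  [set S | S !=set0 /\ wstar_closed S].

Definition wstar_bounded (S : set (X -> K)) : Prop :=
  forall A : X, exists M : R, forall s, S s -> absK (s A) <= M.

Definition Bset : set (set (X -> K)) :=
  [set S | Fset S /\ wstar_bounded S].

Definition dH (A : X) (S T : set (X -> K)) : \bar R :=
  maxe
    (ereal_sup [set ereal_inf [set (absK (s A - t A))%:E | t in T] | s in S])
    (ereal_sup [set ereal_inf [set (absK (s A - t A))%:E | s in S] | t in T]).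

Definition hyperspace : Type := (fun _ : K -> R => set (X -> K)) absK.

HB.instance Definition _ := gen_eqMixin hyperspace.
HB.instance Definition _ := gen_choiceMixin hyperspace.

(* indices of the subbasic open balls: (centre A of the pseudometric,
   centre S of the ball, radius e) *)
Definition ball_index : Type := (X * hyperspace * R)%type.
HB.instance Definition _ := gen_eqMixin ball_index.
HB.instance Definition _ := gen_choiceMixin ball_index.
HB.instance Definition _ := isPointed.Build ball_index (0, set0, 0).

Definition hball (i : ball_index) : set hyperspace :=
  [set T | (dH i.1.1 i.1.2 T < (i.2)%:E)%E].

(* The topology generated by the family of extended pseudometrics d_H^{(A)}:
   the open balls {T | d_H^{(A)}(S,T) < e}, e > 0, form a subbase. *)
HB.instance Definition _ :=
  isSubBaseTopological.Build hyperspace [set i : ball_index | 0 < i.2] hball.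

Definition convex_comb (l : K) (S0 S1 : set (X -> K)) : set (X -> K) :=
  [set s | exists s0 s1, [/\ S0 s0, S1 s1 &
     s = (fun x => (1 - l) * s0 x + l * s1 x)]].

Definition Bset_convex : Prop :=
  forall (S0 S1 : set (X -> K)) (l : K), Bset S0 -> Bset S1 -> 0 <= l <= 1 ->
    Bset (wstar_closure (convex_comb l S0 S1)).

End Hyper.

Arguments dual {K} X.
Arguments wstar_closure {K X} S.
Arguments wstar_closed {K X} S.
Arguments Fset {K} X.
Arguments hyperspace {R K} absK X.
Arguments wstar_bounded {R K} absK {X} S.
Arguments Bset {R K} absK X.
Arguments Bset_convex {R K} absK X.

Definition path_connected_set (R : realType) (T : topologicalType) (A : set T) :=
  forall a b, A a -> A b ->
    exists g : R -> T, [/\ {within `[0, 1], continuous g},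
                          g 0 = a, g 1 = b & g @` `[0, 1] `<=` A].

Definition prop34_concl (R : realType) (K : numFieldType) (absK : K -> R)
    (X : topologicalLmodType K) : Prop :=
  [/\ closed (Bset absK X : set (subspace (Fset X : set (hyperspace absK X)))),
      Bset_convex absK X,
      path_connected_set R (Bset absK X : set (hyperspace absK X)) &
      exists2 S0, Bset absK X S0 &
        connected_component (Fset X : set (hyperspace absK X)) S0 = Bset absK X].

Definition prop34_hyp (K : numFieldType) (X : topologicalLmodType K) : Prop :=
  hausdorff_space X /\
  (forall x y : X, x <> y -> exists2 s, dual X s & s x <> s y).

(* Main.v *)
Require Import Defs.
From HB Require Import structures.
From mathcomp Require Import all_boot all_algebra.
From mathcomp Require Import all_classical all_reals all_analysis.
From mathcomp.real_closed Require Import complex.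
From mathcomp Require Import finmap all_order lra ring.
Set Implicit Arguments.
Unset Strict Implicit.
Unset Printing Implicit Defensive.
Import Order.TTheory GRing.Theory Num.Theory numFieldTopology.Exports.
Local Open Scope classical_set_scope.
Local Open Scope ring_scope.

Section G.
Variables (R : realType) (K : numFieldType) (absK : K -> R).
Variable (X : topologicalLmodType K).
Hypothesis absK_ge0 : forall x, 0 <= absK x.
Hypothesis absKD : forall x y, absK (x + y) <= absK x + absK y.
Hypothesis absKN : forall x, absK (- x) = absK x.
Hypothesis absK0 : absK 0 = 0.

Lemma hball_open (i : ball_index absK X) : 0 < i.2 -> open (hball i : set (hyperspace absK X)).
Proof.
move=> i0; rewrite /open /=.
exists [set hball i]; last by rewrite bigcup_set1.
by move=> _ ->; apply: finI_from1.
Qed.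

Lemma nbhsH (x : hyperspace absK X) U : nbhs x U -> exists D : {fset ball_index absK X},
   [/\ {subset D <= [set i : ball_index absK X | 0 < i.2]}, (forall i, i \in D -> hball i x) &
   \bigcap_(i in [set` D]) hball i `<=` U].
Proof.
rewrite nbhsE => -[B [oB Bx] BU].
move: oB; rewrite /open /= => -[D' sD' eB].
move: Bx; rewrite -eB => -[C /[dup] D'C /sD' [F sF eC] Cx].
exists F; split => //.
- by move=> j jF; move: Cx; rewrite -eC; apply; rewrite /= jF.
- by rewrite eC => y Cy; apply: BU; rewrite -eB; exists C.
Qed.

Local Notation d A s t := (absK (s A - t A)).
Implicit Types (S T U : set (X -> K)) (A : X).

Definition exc (A : X) (S T : set (X -> K)) : \bar R :=
  ereal_sup [set ereal_inf [set (absK (s A - t A))%:E | t in T] | s in S].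

Lemma d_tri A (s t u : X -> K) : d A s u <= d A s t + d A t u.
Proof. by have := absKD (s A - t A) (t A - u A); rewrite addrA subrK. Qed.

Lemma d_sym A (s t : X -> K) : d A s t = d A t s.
Proof. by rewrite -absKN opprB. Qed.

Lemma dHE A S T : dH absK A S T = maxe (exc A S T) (exc A T S).
Proof.
rewrite /dH /exc; congr Order.max; congr ereal_sup; apply: eq_imagel => t _.
by congr ereal_inf; apply: eq_imagel => s _; rewrite d_sym.
Qed.

Lemma inf_ge0 A (s : X -> K) T : (0 <= ereal_inf [set (d A s t)%:E | t in T])%E.
Proof. by apply: le_ereal_inf_tmp => _ [t _ <-]; rewrite lee_fin. Qed.

Lemma exc_ge0 A S T : S !=set0 -> (0 <= exc A S T)%E.
Proof.
move=> [s Ss]; apply: le_trans (inf_ge0 A s T) _.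
by apply: ereal_sup_ubound; exists s.
Qed.

Lemma inf_le_exc A S T s : S s -> (ereal_inf [set (d A s t)%:E | t in T] <= exc A S T)%E.
Proof. by move=> Ss; apply: ereal_sup_ubound; exists s. Qed.

Lemma exc_tri A S T U : T !=set0 -> (exc A S U <= exc A S T + exc A T U)%E.
Proof.
move=> T0; apply: ge_ereal_sup => _ [s Ss <-].
have e0 := exc_ge0 A U T0.
have s0 : (0 <= exc A S T)%E by apply: exc_ge0; exists s.
case E : (exc A T U) e0 => [r| |] // e0.
- apply: (@le_trans _ _ (ereal_inf [set (d A s t)%:E | t in T] + r%:E)%E); last first.
    by apply: leeD2r; apply: inf_le_exc.
  rewrite -leeBlDr //; apply: le_ereal_inf_tmp => _ [t Tt <-].
  rewrite leeBlDr //; apply/lee_addgt0Pr => e e0'.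
  have : (ereal_inf [set (d A t u)%:E | u in U] < (r + e)%:E)%E.
    apply: le_lt_trans (inf_le_exc A U Tt) _.
    by rewrite E lte_fin ltrDl.
  move=> /ereal_inf_lt [_ [u Uu <-]]; rewrite lte_fin => ltu.
  apply: ge_ereal_inf; exists (d A s u)%:E; first by exists u.
  rewrite -!EFinD lee_fin; apply: le_trans (d_tri A s t u) _.
  by rewrite -addrA lerD2l ltW.
- by rewrite addey ?leey //; apply: contra_eqN s0 => /eqP ->.
Qed.

Lemma dH_sym A S T : dH absK A S T = dH absK A T S.
Proof. by rewrite !dHE maxC. Qed.

Lemma dH_ge0 A S T : S !=set0 -> (0 <= dH absK A S T)%E.
Proof. by move=> S0; rewrite dHE le_max exc_ge0. Qed.

Lemma dH_tri A S T U : S !=set0 -> T !=set0 -> U !=set0 ->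
  (dH absK A S U <= dH absK A S T + dH absK A T U)%E.
Proof.
move=> S0 T0 U0; rewrite [X in (X <= _)%E]dHE ge_max; apply/andP; split.
  apply: le_trans (exc_tri A S U T0) _.
  by apply: leeD; rewrite dHE le_max lexx ?orbT.
apply: le_trans (exc_tri A U S T0) _; rewrite addeC.
by apply: leeD; rewrite dHE le_max lexx ?orbT.
Qed.

Lemma dH_self A S : (dH absK A S S <= 0)%E.
Proof.
rewrite dHE maxxx; apply: ge_ereal_sup => _ [s Ss <-].
by apply: ge_ereal_inf; exists 0%:E => //; exists s => //; rewrite subrr absK0.
Qed.

Lemma dH_lt A S T (e : R) s : (dH absK A S T < e%:E)%E -> S s ->
  exists2 t, T t & d A s t < e.
Proof.
move=> lt Ss.
have : (ereal_inf [set (d A s t)%:E | t in T] < e%:E)%E.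
  apply: le_lt_trans lt; apply: le_trans (inf_le_exc A T Ss) _.
  by rewrite dHE le_max lexx.
by move=> /ereal_inf_lt [_ [t Tt <-]]; rewrite lte_fin; exists t.
Qed.

Lemma exc_le A S T (del : R) :
  (forall s, S s -> forall e, 0 < e -> exists2 t, T t & d A s t <= del + e) ->
  (exc A S T <= del%:E)%E.
Proof.
move=> H; apply: ge_ereal_sup => _ [s Ss <-]; apply/lee_addgt0Pr => e e0.
have [t Tt le] := H s Ss e e0.
by apply: ge_ereal_inf; exists (d A s t)%:E; [exists t | rewrite -EFinD lee_fin].
Qed.


Hypothesis absK_cont : forall (x : K) (e : R), 0 < e -> \forall y \near x, absK (x - y) < e.

Local Notation PT := (prod_topology (fun _ : X => K)).

Lemma ev_nbhs (f : X -> K) A (e : R) : 0 < e ->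
  nbhs (f : PT) [set g : X -> K | absK (f A - g A) < e].
Proof.
move=> e0.
have := @proj_continuous X (fun _ => K) A f.
move=> /(_ [set y | absK (f A - y) < e]); apply.
exact: absK_cont.
Qed.

Lemma absK_le_sub x y : absK x <= absK (x - y) + absK y.
Proof. by have := absKD (x - y) y; rewrite subrK. Qed.

Lemma closed_bound A (M : R) : closed ([set f : X -> K | absK (f A) <= M] : set PT).
Proof.
rewrite -openC openE => f /= /negP; rewrite -ltNge => Mf.
have e0 : 0 < absK (f A) - M by rewrite subr_gt0.
rewrite /interior; apply: (@filterS _ _ (@nbhs_filter PT f) _ _ _ (ev_nbhs f A e0)).
move=> g /= lt; apply/negP; rewrite -ltNge.
have := absK_le_sub (f A) (g A); lra.
Qed.


Hypothesis absKM : forall x y, absK (x * y) = absK x * absK y.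

Lemma closure_bound S A M : (forall s, S s -> absK (s A) <= M) ->
  forall f, closure (S : set PT) f -> absK (f A) <= M.
Proof.
move=> H f cf.
have sub : (S : set PT) `<=` [set f : X -> K | absK (f A) <= M] by [].
have := closureS sub cf.
exact: closed_bound.
Qed.

Lemma Bset_wclosure S : S `<=` dual X -> S !=set0 -> wstar_bounded absK S ->
  Bset absK X (wstar_closure S).
Proof.
move=> SD [s Ss] Sb; split; [split|].
- by exists s; split; [exact: subset_closure | exact: SD].
- split; first by move=> f [].
  move=> f [cf df]; split => //.
  have := closureS (@subIsetl _ (closure (S : set PT)) (dual X)) cf.
  exact: (@closed_closure PT S).
- move=> A; have [M HM] := Sb A; exists M => f [cf _].
  exact: closure_bound cf.
Qed.

Lemma comb_dual (l : K) s0 s1 : dual X s0 -> dual X s1 ->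
  dual X (fun x => (1 - l) * s0 x + l * s1 x).
Proof.
move=> [lin0 c0] [lin1 c1]; split.
  by move=> a x y; rewrite lin0 lin1; ring.
move=> x.
apply: (@continuousD K K^o X (fun x => (1 - l) * s0 x) (fun x => l * s1 x)).
  by apply: (@continuousM K X (fun=> 1 - l) s0); [exact: cst_continuous | exact: c0].
by apply: (@continuousM K X (fun=> l) s1); [exact: cst_continuous | exact: c1].
Qed.

Lemma comb_bounded (l : K) S0 S1 : wstar_bounded absK S0 -> wstar_bounded absK S1 ->
  wstar_bounded absK (convex_comb l S0 S1).
Proof.
move=> b0 b1 A; have [M0 h0] := b0 A; have [M1 h1] := b1 A.
exists (absK (1 - l) * M0 + absK l * M1) => _ [s0 [s1 [S0s0 S1s1 ->]]].
apply: le_trans (absKD _ _) _; rewrite !absKM.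
by apply: lerD; apply: ler_wpM2l => //; [exact: h0 | exact: h1].
Qed.

Lemma comb_sub_dual (l : K) S0 S1 : S0 `<=` dual X -> S1 `<=` dual X ->
  convex_comb l S0 S1 `<=` dual X.
Proof. by move=> D0 D1 _ [s0 [s1 [h0 h1 ->]]]; apply: comb_dual; auto. Qed.

Lemma Bset_comb (l : K) S0 S1 : Bset absK X S0 -> Bset absK X S1 ->
  Bset absK X (wstar_closure (convex_comb l S0 S1)).
Proof.
move=> [[[s0 h0] [D0 _]] b0] [[[s1 h1] [D1 _]] b1].
apply: Bset_wclosure; first exact: comb_sub_dual.
  by exists (fun x => (1 - l) * s0 x + l * s1 x); exists s0, s1.
exact: comb_bounded.
Qed.


Variable emb : R -> K.
Hypothesis emb0 : emb 0 = 0.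
Hypothesis emb1 : emb 1 = 1.
Hypothesis absK_embB : forall a b, absK (emb a - emb b) = `|a - b|.

Definition gpath (S0 S1 : set (X -> K)) (t : R) : hyperspace absK X :=
  wstar_closure (convex_comb (emb t) S0 S1).

Lemma wclosure_id B : Fset X B -> wstar_closure B = B.
Proof.
move=> [_ [D cl]]; apply/seteqP; split => // f Bf.
by split; [exact: subset_closure | exact: D].
Qed.

Lemma gpath0 S0 S1 : Fset X S0 -> S1 !=set0 -> gpath S0 S1 0 = S0.
Proof.
move=> F0 [s1 h1]; rewrite /gpath -[RHS](wclosure_id F0); congr wstar_closure.
apply/seteqP; split.
  move=> _ [s0 [t1 [h0 _ ->]]]; rewrite emb0.
  have -> : (fun x => (1 - 0) * s0 x + 0 * t1 x) = s0.
    by apply: funext => x; rewrite subr0 mul1r mul0r addr0.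
  by [].
move=> s0 h0; exists s0, s1; split => //.
by apply: funext => x; rewrite emb0 subr0 mul1r mul0r addr0.
Qed.

Lemma gpath1 S0 S1 : S0 !=set0 -> Fset X S1 -> gpath S0 S1 1 = S1.
Proof.
move=> [s0 h0] F1; rewrite /gpath -[RHS](wclosure_id F1); congr wstar_closure.
apply/seteqP; split.
  move=> _ [t0 [s1 [_ h1 ->]]]; rewrite emb1.
  have -> : (fun x => (1 - 1) * t0 x + 1 * s1 x) = s1.
    by apply: funext => x; rewrite subrr mul1r mul0r add0r.
  by [].
move=> s1 h1; exists s0, s1; split => //.
by apply: funext => x; rewrite emb1 subrr mul1r mul0r add0r.
Qed.

Lemma gdist_exc S0 S1 A M0 M1 : S0 `<=` dual X -> S1 `<=` dual X ->
  (forall s, S0 s -> absK (s A) <= M0) -> (forall s, S1 s -> absK (s A) <= M1) ->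
  forall t s, (exc A (gpath S0 S1 t) (gpath S0 S1 s) <= (`|t - s| * (M0 + M1))%:E)%E.
Proof.
move=> D0 D1 b0 b1 t s; apply: exc_le => u [cu du] e e0.
have [c [[s0 [s1 [h0 h1 ->]]] /= lt]] := cu _ (ev_nbhs u A e0).
exists (fun x => (1 - emb s) * s0 x + emb s * s1 x).
  split; first by apply: subset_closure; exists s0, s1.
  by apply: comb_dual; [exact: D0 | exact: D1].
set a := s0 A; set b := s1 A.
have E : ((1 - emb t) * a + emb t * b) - ((1 - emb s) * a + emb s * b) =
   (emb s - emb t) * (a - b) by ring.
have := d_tri A u (fun x => (1 - emb t) * s0 x + emb t * s1 x)
                  (fun x => (1 - emb s) * s0 x + emb s * s1 x).
rewrite /= -/a -/b E absKM absK_embB distrC => le1.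
have le2 : absK (a - b) <= M0 + M1.
  apply: le_trans (absKD _ _) _; rewrite absKN.
  by apply: lerD; [exact: b0 h0 | exact: b1 h1].
have le3 : `|t - s| * absK (a - b) <= `|t - s| * (M0 + M1).
  by apply: ler_wpM2l.
move: lt; rewrite /= -/a -/b => lt.
lra.
Qed.


Lemma gdist S0 S1 A M0 M1 : S0 `<=` dual X -> S1 `<=` dual X ->
  (forall s, S0 s -> absK (s A) <= M0) -> (forall s, S1 s -> absK (s A) <= M1) ->
  forall t s, (dH absK A (gpath S0 S1 t) (gpath S0 S1 s) <= (`|t - s| * (M0 + M1))%:E)%E.
Proof.
move=> D0 D1 b0 b1 t s; rewrite dHE ge_max; apply/andP; split.
  exact: gdist_exc.
by rewrite distrC; apply: gdist_exc.
Qed.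

Lemma Bset_gpath S0 S1 t : Bset absK X S0 -> Bset absK X S1 ->
  Bset absK X (gpath S0 S1 t).
Proof. exact: Bset_comb. Qed.

Lemma gpath_cont S0 S1 : Bset absK X S0 -> Bset absK X S1 ->
  continuous (gpath S0 S1 : R -> hyperspace absK X).
Proof.
move=> B0 B1 t U /nbhsH [D [Dpos Dx DU]].
apply: (@filterS _ _ _ (\bigcap_(i in [set` D]) (gpath S0 S1 @^-1` hball i))).
  by move=> s hs; apply: DU => i iD; apply: hs.
apply: filter_bigI => -[[A S] e] iD.
have e0 : 0 < e by have := Dpos _ iD; rewrite in_setE.
have hx : (dH absK A S (gpath S0 S1 t) < e%:E)%E := Dx _ iD.
have [[[u hu] [Du _]] _] := Bset_gpath t B0 B1.
have [v Sv _] : exists2 v, S v & True.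
  by rewrite dH_sym in hx; have [v ? _] := dH_lt hx hu; exists v.
have ge0 := @dH_ge0 A S (gpath S0 S1 t) (ex_intro _ v Sv).
case E : (dH absK A S (gpath S0 S1 t)) hx ge0 => [r| |] // hx ge0.
rewrite lte_fin in hx; rewrite lee_fin in ge0.
have [[[s0 h0] [D0 _]] bd0] := B0; have [[[s1 h1] [D1 _]] bd1] := B1.
have [M0 b0] := bd0 A; have [M1 b1] := bd1 A.
have M00 : 0 <= M0 by apply: le_trans (b0 _ h0).
have M10 : 0 <= M1 by apply: le_trans (b1 _ h1).
set C := M0 + M1 + 1.
have C0 : 0 < C by rewrite /C; lra.
have d0 : 0 < (e - r) / C by apply: divr_gt0; lra.
apply/nbhs_ballP; exists ((e - r) / C) => // s /=; rewrite -ball_normE /= => ts.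
have T0 : (gpath S0 S1 t) !=set0 by exists u.
have [[T1 _] _] := Bset_gpath s B0 B1.
have S0' : S !=set0 by exists v.
have hd := gdist D0 D1 b0 b1 t s.
apply: le_lt_trans (dH_tri A S0' T0 T1) _; rewrite E.
apply: le_lt_trans (leeD2l _ hd) _; rewrite -EFinD lte_fin.
have h1' : `|t - s| * C < e - r by rewrite -ltr_pdivlMr.
have h2' : `|t - s| * (M0 + M1) <= `|t - s| * C by apply: ler_wpM2l => //; rewrite /C; lra.
rewrite /=; lra.
Qed.


Lemma hball_self A (G : hyperspace absK X) : hball (A, G, 1) G.
Proof. by rewrite /hball /=; apply: le_lt_trans (dH_self A G) _; rewrite lte_fin ltr01. Qed.

Lemma hball1_open A (G : hyperspace absK X) : open (hball (A, G, 1) : set (hyperspace absK X)).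
Proof. by apply: hball_open; rewrite /= ltr01. Qed.

Lemma Bset_sub : Bset absK X `<=` Fset X.
Proof. by move=> B []. Qed.

Lemma Bset_closed :
  closed (Bset absK X : set (subspace (Fset X : set (hyperspace absK X)))).
Proof.
rewrite /closed closure_subspaceW; last exact: Bset_sub.
move=> F [cF FF]; split => // A.
have [G [BG HG]] := cF _ (open_nbhs_nbhs (conj (hball1_open A F) (hball_self A F))).
have [M bM] := BG.2 A; exists (M + 1) => f Ff.
have [g Gg lt] := dH_lt HG Ff.
have := absK_le_sub (f A) (g A); have := bM g Gg; move: lt; rewrite /=; lra.
Qed.

Lemma convex_ok : Bset_convex absK X.
Proof. by move=> S0 S1 l B0 B1 _; exact: Bset_comb. Qed.

Lemma itv01_0 : `[(0:R), 1]%classic 0.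
Proof. by rewrite /= in_itv /= lexx ler01. Qed.
Lemma itv01_1 : `[(0:R), 1]%classic 1.
Proof. by rewrite /= in_itv /= lexx ler01. Qed.

Lemma path_ok : path_connected_set R (Bset absK X : set (hyperspace absK X)).
Proof.
move=> a b Ba Bb; exists (gpath a b); split.
- by apply: continuous_subspaceT; exact: gpath_cont.
- exact: gpath0 Ba.1 Bb.1.1.
- exact: gpath1 Ba.1.1 Bb.1.
- by move=> _ [t _ <-]; exact: Bset_gpath.
Qed.

Definition S00 : hyperspace absK X := wstar_closure [set (fun _ : X => (0 : K))].

Lemma Bset_S00 : Bset absK X S00.
Proof.
apply: Bset_wclosure.
- move=> _ ->; split; first by move=> a x y; rewrite mulr0 addr0.
  exact: cst_continuous.
- by exists (fun _ => 0).
- by move=> A; exists 0 => _ ->; rewrite absK0.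
Qed.

Lemma Bset_connected : connected (Bset absK X : set (hyperspace absK X)).
Proof.
have -> : (Bset absK X : set (hyperspace absK X)) =
    \bigcup_(B in Bset absK X) (gpath S00 B @` `[0, 1]).
  apply/seteqP; split.
    move=> B BB; exists B => //; exists 1; first exact: itv01_1.
    exact: gpath1 Bset_S00.1.1 BB.1.
  by move=> _ [B BB [t _ <-]]; exact: Bset_gpath Bset_S00 BB.
apply: bigcup_connected.
  exists S00 => B BB; exists 0; first exact: itv01_0.
  exact: gpath0 Bset_S00.1 BB.1.1.
move=> B BB; apply: connected_continuous_connected; first exact: segment_connected.
by apply: continuous_subspaceT; exact: gpath_cont Bset_S00 BB.
Qed.

Lemma comp_sub (S0 : hyperspace absK X) : Bset absK X S0 ->
  connected_component (Fset X : set (hyperspace absK X)) S0 `<=` Bset absK X.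
Proof.
move=> BS0 F [C [CS0 CF Cc] CF']; split; first exact: CF.
move=> A.
pose W := [set G : hyperspace absK X | (dH absK A S0 G < +oo)%E].
have S0n : S0 !=set0 by case: BS0 => [[]].
have Cn G : C G -> G !=set0 by move=> /CF [].
have key : C `&` W = C.
  apply: Cc.
  - exists S0; split => //; rewrite /W; apply: le_lt_trans (dH_self A S0) _.
    exact: ltry.
  - exists (\bigcup_(G in Fset X `&` W) hball (A, G, 1)).
      by apply: bigcup_open => G _; exact: hball1_open.
    apply/seteqP; split.
      move=> G [CG WG]; split => //; exists G; last exact: hball_self.
      by split; [exact: CF | exact: WG].
    move=> G [CG [G' [FG' WG'] hG]]; split => //; rewrite /W.
    apply: le_lt_trans (dH_tri A S0n FG'.1 (Cn G CG)) _.
    by apply: lte_add_pinfty => //; apply: lt_trans hG _; exact: ltry.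
  - exists (~` \bigcup_(G in Fset X `&` ~` W) hball (A, G, 1)).
      by rewrite closedC; apply: bigcup_open => G _; exact: hball1_open.
    apply/seteqP; split.
      move=> G [CG WG]; split => //; move=> [G' [FG' nWG'] hG]; apply: nWG'.
      rewrite /W; apply: le_lt_trans (dH_tri A S0n (Cn G CG) FG'.1) _.
      apply: lte_add_pinfty => //; rewrite dH_sym; apply: lt_trans hG _; exact: ltry.
    move=> G [CG nb]; split => //; apply: contrapT => nWG; apply: nb.
    by exists G; [split => //; exact: CF | exact: hball_self].
have WF : W F.
  have : (C `&` W) F by rewrite key.
  by case.
have ge0 := @dH_ge0 A S0 F S0n.
have WF' : (dH absK A S0 F < +oo)%E := WF.
case E : (dH absK A S0 F) WF' ge0 => [r| |]; [move=> _ ge0 | by [] | by []].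
have lt : (dH absK A F S0 < (r + 1)%:E)%E by rewrite dH_sym E lte_fin ltrDl ltr01.
have [M bM] := BS0.2 A; exists (M + (r + 1)) => f Ff.
have [g Gg lt'] := dH_lt lt Ff.
have := absK_le_sub (f A) (g A); have := bM g Gg; lra.
Qed.

Lemma concl_generic : prop34_concl absK X.
Proof.
split.
- exact: Bset_closed.
- exact: convex_ok.
- exact: path_ok.
- exists S00; first exact: Bset_S00.
  apply/seteqP; split; first exact: comp_sub Bset_S00.
  apply: connected_component_max => //; first exact: Bset_S00.
  - exact: Bset_sub.
  - exact: Bset_connected.
Qed.

End G.

Theorem proposition3p4 (R : realType) :
  (forall X : topologicalLmodType R,
      prop34_hyp X -> prop34_concl (fun x : R => Num.norm x) X) /\
  (forall X : topologicalLmodType R[i],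
      prop34_hyp X -> prop34_concl (@Normc.normc R) X).
Proof.
split => X _.
- apply: (@concl_generic R R (fun x : R => Num.norm x) X _ _ _ _ _ _ id) => //.
  all: try (by move=> *; rewrite ?normr0 ?normrN ?normrM ?ler_normD).
  move=> x e e0; apply/nbhs_ballP; exists e => // y; rewrite -ball_normE.
- have nC : forall c : R, Normc.normc ((c%:C)%C) = `|c|.
    by move=> c; rewrite /Normc.normc /= expr0n /= addr0 sqrtr_sqr.
  apply: (@concl_generic R R[i] (@Normc.normc R) X _ _ _ _ _ _ (fun t => (t%:C)%C)).
  + by move=> [a b]; rewrite /Normc.normc sqrtr_ge0.
  + by move=> x y; exact: le_normcD.
  + by move=> x; exact: normcN.
  + exact: Normc.normc0.
  + move=> x e e0; apply/nbhs_ballP; exists (e%:C)%C; first by rewrite /= ltcR.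
    move=> y; rewrite /ball /=.
    have -> : `|x - y| = ((Normc.normc (x - y))%:C)%C by case: (x - y).
    by rewrite ltcR.
  + by move=> x y; exact: Normc.normcM.
  + by [].
  + by [].
  + by move=> a b; rewrite -rmorphB nC.
Qed.
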